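(* Consider the parametric weighted affiliation random graph mixture model with $Q\ge2$ groups, and assume the family $\mathcal M=\{F(\cdot,\theta):\theta\in\Theta\}$ satisfies: (i) no $F(\cdot,\theta)$ has a point mass at $0$; (ii) finite mixtures from $\mathcal M$ are identifiable up to label swapping (for every $r\ge1$, $\sum_{i=1}^r a_iF(\cdot,\theta_i)=\sum_{i=1}^r a_i'F(\cdot,\theta_i')$ implies $\sum_i a_i\delta_{\theta_i}=\sum_i a_i'\delta_{\theta_i'}$). If $\theta_{\rm in}\ne\theta_{\rm out}$, then $\alpha,\beta,\theta_{\rm in},\theta_{\rm out}$ are strictly identifiable from the joint distribution of $K_3$, and, these being identified, the group priors $\boldsymbol\pi$ are identifiable, up to label swapping, from the joint distribution of $K_Q$.
   Context: Random graph mixture model: nodes have i.i.d. latent groups $Z_i\in\{1,\dots,Q\}$ with $\pi_q=\mathbb P(Z_i=q)\in(0,1)$, $\sum_q\pi_q=1$; edge variables $X_{ij}$ ($i<j$) are conditionally independent given all $Z$'s, with law of $X_{ij}$ depending only on $(Z_i,Z_j)$. Parametric weighted affiliation model: $X_{ij}$ takes values in $\mathbb N$, $\mathbb R$ or $\mathbb R^s$ and, given $Z_i=q,Z_j=l$, has law $(1-\alpha)\delta_0+\alpha F(\cdot,\theta_{\rm in})$ if $q=l$ and $(1-\beta)\delta_0+\beta F(\cdot,\theta_{\rm out})$ if $q\ne l$, with $\alpha,\beta\in(0,1]$, $\theta_{\rm in},\theta_{\rm out}\in\Theta\subset\mathbb R^p$, $\delta_0$ the Dirac mass at $0$. $K_n$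 denotes the collection of the $\binom n2$ edge variables among $n$ nodes. *)

(* Defs.v *)
From Stdlib Require Import Reals Lra Lia List Classical ClassicalEpsilon.
Import ListNotations.
Open Scope R_scope.

Fixpoint fsum (n : nat) (f : nat -> R) : R :=
  match n with O => 0 | S m => fsum m f + f m end.
Fixpoint fprod (n : nat) (f : nat -> R) : R :=
  match n with O => 1 | S m => fprod m f * f m end.

Definition is_sigma_algebra {X : Type} (meas : (X -> Prop) -> Prop) : Prop :=
  meas (fun _ => True) /\
  (forall A, meas A -> meas (fun x => ~ A x)) /\
  (forall A : nat -> (X -> Prop), (forall n, meas (A n)) ->
     meas (fun x => exists n, A n x)).

Definition is_prob_measure {X : Type} (meas : (X -> Prop) -> Prop)
    (mu : (X -> Prop) -> R) : Prop :=
  (forall A, meas A -> 0 <= mu A) /\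
  mu (fun _ => True) = 1 /\
  (forall A : nat -> (X -> Prop),
     (forall n, meas (A n)) ->
     (forall m n x, m <> n -> A m x -> A n x -> False) ->
     infinite_sum (fun n => mu (A n)) (mu (fun x => exists n, A n x))).

Definition ind {T : Type} (B : T -> Prop) (t : T) : R :=
  if excluded_middle_informative (B t) then 1 else 0.

Definition dirac {X : Type} (x0 : X) (A : X -> Prop) : R := ind A x0.

Definition no_atom_at {X Theta : Type} (x0 : X) (F : Theta -> (X -> Prop) -> R)
  : Prop :=
  forall th, F th (fun x => x = x0) = 0.

Definition finite_mixtures_identifiable {X Theta : Type}
    (meas : (X -> Prop) -> Prop) (F : Theta -> (X -> Prop) -> R) : Prop :=
  forall (r : nat) (a a' : nat -> R) (t t' : nat -> Theta),
    (1 <= r)%nat ->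
    (forall i, (i < r)%nat -> 0 < a i) ->
    (forall i, (i < r)%nat -> 0 < a' i) ->
    fsum r a = 1 -> fsum r a' = 1 ->
    (forall A, meas A ->
       fsum r (fun i => a i * F (t i) A) = fsum r (fun i => a' i * F (t' i) A)) ->
    forall B : Theta -> Prop,
      fsum r (fun i => a i * dirac (t i) B) = fsum r (fun i => a' i * dirac (t' i) B).

Definition edge_law {X Theta : Type} (x0 : X) (F : Theta -> (X -> Prop) -> R)
    (alpha beta : R) (th_in th_out : Theta) (q l : nat) (A : X -> Prop) : R :=
  if Nat.eqb q l
  then (1 - alpha) * dirac x0 A + alpha * F th_in A
  else (1 - beta) * dirac x0 A + beta * F th_out A.

Fixpoint assignments (Q n : nat) : list (list nat) :=
  match n with
  | O => [ [] ]
  | S m => flat_map (fun z => map (fun q => z ++ [q]) (seq 0 Q)) (assignments Q m)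
  end.

Fixpoint lsum (l : list R) : R :=
  match l with [] => 0 | x :: l' => x + lsum l' end.

Definition joint_rect {X Theta : Type} (x0 : X) (F : Theta -> (X -> Prop) -> R)
    (Q : nat) (pi : nat -> R) (alpha beta : R) (th_in th_out : Theta)
    (n : nat) (A : nat -> nat -> (X -> Prop)) : R :=
  lsum (map (fun z =>
      fprod n (fun i => pi (nth i z O)) *
      fprod n (fun j => fprod j (fun i =>
         edge_law x0 F alpha beta th_in th_out (nth i z O) (nth j z O) (A i j))))
    (assignments Q n)).

(* Two parameter values give the same joint distribution of K_n:
   equality on all measurable rectangles (a pi-system generating the
   product sigma-algebra, hence equivalent to equality of the joint laws). *)
Definition same_law_K {X Theta : Type} (meas : (X -> Prop) -> Prop) (x0 : X)
    (F : Theta -> (X -> Prop) -> R) (Q n : nat)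
    (pi : nat -> R) (alpha beta : R) (th_in th_out : Theta)
    (pi' : nat -> R) (alpha' beta' : R) (th_in' th_out' : Theta) : Prop :=
  forall A : nat -> nat -> (X -> Prop),
    (forall i j, (i < j < n)%nat -> meas (A i j)) ->
    joint_rect x0 F Q pi alpha beta th_in th_out n A =
    joint_rect x0 F Q pi' alpha' beta' th_in' th_out' n A.

Definition valid_params {Theta : Type} (Q : nat) (pi : nat -> R) (alpha beta : R)
    (th_in th_out : Theta) : Prop :=
  (forall q, (q < Q)%nat -> 0 < pi q < 1) /\ fsum Q pi = 1 /\
  0 < alpha <= 1 /\ 0 < beta <= 1 /\ th_in <> th_out.

Definition is_perm (Q : nat) (sigma : nat -> nat) : Prop :=
  (forall q, (q < Q)%nat -> (sigma q < Q)%nat) /\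
  (forall q q', (q < Q)%nat -> (q' < Q)%nat -> sigma q = sigma q' -> q = q').

(* Main.v *)
Require Import Defs.
From Stdlib Require Import Reals.
From Stdlib Require Import Lra Lia List Permutation Classical ClassicalEpsilon FunctionalExtensionality.
Import ListNotations.
Open Scope R_scope.

Lemma fsum_ext n f g : (forall k, (k < n)%nat -> f k = g k) -> fsum n f = fsum n g.
Proof. induction n; simpl; intros H; auto. rewrite IHn by (intros; apply H; lia). rewrite (H n) by lia. reflexivity. Qed.

Lemma fprod_ext n f g : (forall k, (k < n)%nat -> f k = g k) -> fprod n f = fprod n g.
Proof. induction n; simpl; intros H; auto. rewrite IHn by (intros; apply H; lia). rewrite (H n) by lia. reflexivity. Qed.

Lemma fsum_scale n c f : fsum n (fun k => c * f k) = c * fsum n f.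
Proof. induction n; simpl; [ring|]. rewrite IHn; ring. Qed.

Lemma fsum_add n f g : fsum n (fun k => f k + g k) = fsum n f + fsum n g.
Proof. induction n; simpl; [ring|]. rewrite IHn; ring. Qed.

Lemma fsum_zero n : fsum n (fun _ => 0) = 0.
Proof. induction n; simpl; [ring|]. rewrite IHn; ring. Qed.

Lemma fsum_shift n f : fsum (S n) f = f O + fsum n (fun i => f (S i)).
Proof. induction n; simpl; [ring|]. simpl in IHn. rewrite IHn. ring. Qed.

Lemma fsum_delta n p h : (p < n)%nat -> fsum n (fun q => if Nat.eqb p q then h q else 0) = h p.
Proof.
  induction n; intros Hp; [lia|]. simpl.
  destruct (Nat.eqb_spec p n).
  - subst. rewrite (fsum_ext _ _ (fun _ => 0)). rewrite fsum_zero; ring.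
    intros k Hk. destruct (Nat.eqb_spec n k); [lia|reflexivity].
  - rewrite IHn by lia. ring.
Qed.

Lemma fsum_pos n f : (1 <= n)%nat -> (forall k, (k < n)%nat -> 0 < f k) -> 0 < fsum n f.
Proof.
  induction n; intros Hn H; [lia|]. simpl.
  destruct n. simpl. specialize (H O ltac:(lia)). lra.
  assert (0 < fsum (S n) f) by (apply IHn; [lia| intros; apply H; lia]).
  specialize (H (S n) ltac:(lia)). lra.
Qed.

Lemma fprod_upd m k0 a g : (k0 < m)%nat ->
  fprod m (fun k => if Nat.eqb k k0 then a else g k) =
  a * fprod m (fun k => if Nat.eqb k k0 then 1 else g k).
Proof.
  induction m; intros H; [lia|]. simpl.
  destruct (Nat.eqb_spec m k0).
  - subst. rewrite (fprod_ext _ _ g). rewrite (fprod_ext k0 (fun k => if Nat.eqb k k0 then 1 else g k) g). ring.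
    all: intros k Hk; destruct (Nat.eqb_spec k k0); [lia|reflexivity].
  - rewrite IHm by lia. ring.
Qed.

Lemma fprod_one n : fprod n (fun _ => 1) = 1.
Proof. induction n; simpl; [ring|]. rewrite IHn; ring. Qed.

Lemma fprod_first n X : (1 <= n)%nat -> fprod n (fun i => if Nat.eqb i 0 then X else 1) = X.
Proof.
  intros H. rewrite fprod_upd by lia. rewrite (fprod_ext _ _ (fun _ => 1)). rewrite fprod_one; ring.
  intros k _. destruct (Nat.eqb k 0); reflexivity.
Qed.

Lemma lsum_app l1 l2 : lsum (l1 ++ l2) = lsum l1 + lsum l2.
Proof. induction l1; simpl; [ring|]. rewrite IHl1; ring. Qed.

Lemma lsum_map_ext_in {A} (l : list A) f g : (forall x, In x l -> f x = g x) -> lsum (map f l) = lsum (map g l).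
Proof. induction l; simpl; intros H; auto. rewrite H by auto. rewrite IHl by auto. reflexivity. Qed.

Lemma lsum_map_lin3 {A} (l : list A) c0 c1 c2 f0 f1 f2 :
  lsum (map (fun x => c0 * f0 x + c1 * f1 x + c2 * f2 x) l) =
  c0 * lsum (map f0 l) + c1 * lsum (map f1 l) + c2 * lsum (map f2 l).
Proof. induction l; simpl; [ring|]. rewrite IHl; ring. Qed.

Lemma lsum_map_seq n f : lsum (map f (seq 0 n)) = fsum n f.
Proof. induction n; [reflexivity|]. rewrite seq_S, map_app, lsum_app, IHn. simpl. ring. Qed.

Lemma lsum_map_flat_map {A B} (f : B -> R) (g : A -> list B) l :
  lsum (map f (flat_map g l)) = lsum (map (fun x => lsum (map f (g x))) l).
Proof. induction l; simpl; auto. rewrite map_app, lsum_app, IHl. reflexivity. Qed.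

Lemma lsum_assign_S Q n f : lsum (map f (assignments Q (S n))) =
  lsum (map (fun z => fsum Q (fun q => f (z ++ [q]))) (assignments Q n)).
Proof.
  simpl. rewrite lsum_map_flat_map. apply lsum_map_ext_in. intros z _.
  rewrite map_map, lsum_map_seq. reflexivity.
Qed.

Lemma assign_in Q n z : In z (assignments Q n) -> length z = n /\ forall x, In x z -> (x < Q)%nat.
Proof.
  revert z; induction n; simpl; intros z H.
  - destruct H as [<-|[]]. split; [reflexivity| intros x []].
  - apply in_flat_map in H. destruct H as [z' [Hz' H]]. apply in_map_iff in H.
    destruct H as [q [<- Hq]]. apply in_seq in Hq. destruct (IHn _ Hz') as [L Hx].
    split. rewrite length_app; simpl; lia.
    intros x Hx'. apply in_app_or in Hx'. destruct Hx' as [Hx'|[<-|[]]]; auto. lia.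
Qed.

Definition Gsum (Q n : nat) (pi : nat -> R) (u : nat -> nat -> bool -> R) : R :=
  lsum (map (fun z => fprod n (fun i => pi (nth i z O)) *
     fprod n (fun j => fprod j (fun i => u i j (Nat.eqb (nth i z O) (nth j z O)))))
   (assignments Q n)).

Lemma joint_Gsum {X Theta : Type} (x0 : X) (F : Theta -> (X -> Prop) -> R) Q pi al be ti to n A :
  joint_rect x0 F Q pi al be ti to n A =
  Gsum Q n pi (fun i j b => if b then (1 - al) * dirac x0 (A i j) + al * F ti (A i j)
                            else (1 - be) * dirac x0 (A i j) + be * F to (A i j)).
Proof. reflexivity. Qed.

Lemma Gsum_ext_range Q n pi u u' :
  (forall i j b, (i < j)%nat -> (j < n)%nat -> u i j b = u' i j b) ->
  Gsum Q n pi u = Gsum Q n pi u'.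
Proof.
  intros H. unfold Gsum. apply lsum_map_ext_in. intros z _. f_equal.
  apply fprod_ext. intros j Hj. apply fprod_ext. intros i Hi. apply H; lia.
Qed.

Definition upd (u : nat -> nat -> bool -> R) i0 j0 (w : bool -> R) :=
  fun i j => if andb (Nat.eqb i i0) (Nat.eqb j j0) then w else u i j.

Lemma Gsum_upd Q n pi u i0 j0 : (i0 < j0)%nat -> (j0 < n)%nat ->
  exists K : list nat -> R, forall w,
  Gsum Q n pi (upd u i0 j0 w) =
  lsum (map (fun z => w (Nat.eqb (nth i0 z O) (nth j0 z O)) * K z) (assignments Q n)).
Proof.
  intros H1 H2.
  exists (fun z => fprod n (fun i => pi (nth i z O)) *
     (fprod j0 (fun i => if Nat.eqb i i0 then 1 else u i j0 (Nat.eqb (nth i z O) (nth j0 z O))) *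
      fprod n (fun j => if Nat.eqb j j0 then 1 else
        fprod j (fun i => u i j (Nat.eqb (nth i z O) (nth j z O)))))).
  intros w. unfold Gsum. apply lsum_map_ext_in. intros z _.
  set (e := fun i j => Nat.eqb (nth i z O) (nth j z O)).
  assert (HP : fprod n (fun j => fprod j (fun i => upd u i0 j0 w i j (Nat.eqb (nth i z O) (nth j z O)))) =
     fprod n (fun j => if Nat.eqb j j0 then
      w (e i0 j0) * fprod j0 (fun i => if Nat.eqb i i0 then 1 else u i j0 (e i j0))
      else fprod j (fun i => u i j (e i j)))).
  { apply fprod_ext. intros j Hj. unfold upd. destruct (Nat.eqb_spec j j0).
    + subst. rewrite <- fprod_upd by lia. apply fprod_ext. intros i Hi.
      destruct (Nat.eqb_spec i i0); simpl; [subst; reflexivity|reflexivity].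
    + apply fprod_ext. intros i Hi. rewrite Bool.andb_false_r. reflexivity. }
  rewrite HP. rewrite fprod_upd by lia. unfold e. ring.
Qed.

Definition dot (k v : nat -> R) := k O * v O + k 1%nat * v 1%nat + k 2%nat * v 2%nat.

Definition Jf Q n (kap : bool -> nat -> R) pi (V : nat -> nat -> nat -> R) :=
  Gsum Q n pi (fun i j b => dot (kap b) (V i j)).

Definition updV (V : nat -> nat -> nat -> R) i0 j0 (w : nat -> R) :=
  fun i j => if andb (Nat.eqb i i0) (Nat.eqb j j0) then w else V i j.

Lemma J_decomp Q n kap pi V i0 j0 c0 c1 c2 w0 w1 w2 :
  (i0 < j0)%nat -> (j0 < n)%nat ->
  (forall k, (k < 3)%nat -> V i0 j0 k = c0 * w0 k + c1 * w1 k + c2 * w2 k) ->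
  Jf Q n kap pi V = c0 * Jf Q n kap pi (updV V i0 j0 w0) + c1 * Jf Q n kap pi (updV V i0 j0 w1)
     + c2 * Jf Q n kap pi (updV V i0 j0 w2).
Proof.
  intros H1 H2 HV.
  set (u := fun i j b => dot (kap b) (V i j)).
  destruct (Gsum_upd Q n pi u i0 j0 H1 H2) as [K HK].
  assert (E : forall w, Jf Q n kap pi (updV V i0 j0 w) = Gsum Q n pi (upd u i0 j0 (fun b => dot (kap b) w))).
  { intros w. unfold Jf. f_equal. extensionality i. extensionality j. extensionality b.
    unfold upd, updV, u. destruct (andb _ _); reflexivity. }
  rewrite !E, !HK.
  assert (E0 : Jf Q n kap pi V = Gsum Q n pi (upd u i0 j0 (fun b => dot (kap b) (V i0 j0)))).
  { unfold Jf. f_equal. extensionality i. extensionality j. extensionality b.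
    unfold upd, u. destruct (Nat.eqb_spec i i0), (Nat.eqb_spec j j0); subst; reflexivity. }
  rewrite E0, HK, <- lsum_map_lin3. apply lsum_map_ext_in. intros z _.
  unfold dot. rewrite !HV by lia. ring.
Qed.

Lemma J_span Q n kap kap' pi pi' (Rz : (nat -> R) -> Prop) :
  (forall v, exists c0 c1 c2 w0 w1 w2, Rz w0 /\ Rz w1 /\ Rz w2 /\
      forall k, (k < 3)%nat -> v k = c0 * w0 k + c1 * w1 k + c2 * w2 k) ->
  (forall V, (forall i j, (i < j)%nat -> (j < n)%nat -> Rz (V i j)) ->
      Jf Q n kap pi V = Jf Q n kap' pi' V) ->
  forall V, Jf Q n kap pi V = Jf Q n kap' pi' V.
Proof.
  intros Hsp H.
  assert (G : forall L V, (forall i j, (i < j)%nat -> (j < n)%nat -> ~ In (i, j) L -> Rz (V i j)) ->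
      Jf Q n kap pi V = Jf Q n kap' pi' V).
  { induction L as [|[i0 j0] L IH]; intros V HV.
    - apply H. intros i j Hi Hj. apply HV; auto.
    - destruct (Nat.lt_decidable i0 j0) as [Hi0|Hi0]; [destruct (Nat.lt_decidable j0 n) as [Hj0|Hj0]|].
      + destruct (Hsp (V i0 j0)) as [c0 [c1 [c2 [w0 [w1 [w2 [R0 [R1 [R2 Hd]]]]]]]]].
        assert (Hu : forall w, Rz w -> Jf Q n kap pi (updV V i0 j0 w) = Jf Q n kap' pi' (updV V i0 j0 w)).
        { intros w Hw. apply IH. intros i j Hi Hj Hn. unfold updV.
          destruct (Nat.eqb_spec i i0), (Nat.eqb_spec j j0); simpl; subst; auto;
          apply HV; auto; intros [Heq|Heq]; try (inversion Heq; congruence); auto. }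
        rewrite (J_decomp Q n kap pi V i0 j0 c0 c1 c2 w0 w1 w2) by auto.
        rewrite (J_decomp Q n kap' pi' V i0 j0 c0 c1 c2 w0 w1 w2) by auto.
        rewrite !Hu by auto. reflexivity.
      + apply IH. intros i j Hi Hj Hn. apply HV; auto. intros [Heq|Heq]; auto. inversion Heq; subst; lia.
      + apply IH. intros i j Hi Hj Hn. apply HV; auto. intros [Heq|Heq]; auto. inversion Heq; subst; lia. }
  intros V. apply (G (flat_map (fun j => map (fun i => (i, j)) (seq 0 j)) (seq 0 n))).
  intros i j Hi Hj Hn. exfalso. apply Hn. apply in_flat_map. exists j. split.
  apply in_seq; lia. apply in_map_iff. exists i. split; auto. apply in_seq; lia.
Qed.

Lemma dirac_x0 {X} (x0 : X) : dirac x0 (fun x => x = x0) = 1.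
Proof. unfold dirac, Defs.ind. destruct (excluded_middle_informative (x0 = x0)); [reflexivity| congruence]. Qed.
Lemma dirac_T {X} (x0 : X) : dirac x0 (fun _ => True) = 1.
Proof. unfold dirac, Defs.ind. destruct (excluded_middle_informative True); [reflexivity| tauto]. Qed.
Lemma dirac_pt {T} (t t' : T) : dirac t (fun s => s = t') = if excluded_middle_informative (t = t') then 1 else 0.
Proof. reflexivity. Qed.

Definition gv {X Theta : Type} (x0 : X) (F : Theta -> (X -> Prop) -> R) (a b : Theta) (A : X -> Prop) : nat -> R :=
  fun k => match k with O => dirac x0 A | 1%nat => F a A | _ => F b A end.

Lemma frame {X Theta : Type} (meas : (X -> Prop) -> Prop) (x0 : X) (F : Theta -> (X -> Prop) -> R)
  (a b : Theta) (D : X -> Prop) Q n pi al be ti to pi' al' be' ti' to' kap kap' :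
  meas (fun x => x = x0) -> meas (fun _ => True) -> meas D -> F a D <> F b D ->
  (forall th, F th (fun _ => True) = 1) -> no_atom_at x0 F ->
  (forall A (bb : bool), (if bb then (1 - al) * dirac x0 A + al * F ti A else (1 - be) * dirac x0 A + be * F to A)
      = dot (kap bb) (gv x0 F a b A)) ->
  (forall A (bb : bool), (if bb then (1 - al') * dirac x0 A + al' * F ti' A else (1 - be') * dirac x0 A + be' * F to' A)
      = dot (kap' bb) (gv x0 F a b A)) ->
  same_law_K meas x0 F Q n pi al be ti to pi' al' be' ti' to' ->
  forall V, Jf Q n kap pi V = Jf Q n kap' pi' V.
Proof.
  intros Hx0 HT HD HFD HF1 Hna E1 E2 Hsame.
  set (Rz := fun v : nat -> R => exists A, meas A /\ v O = dirac x0 A /\ v 1%nat = F a A /\ v 2%nat = F b A).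
  apply (J_span Q n kap kap' pi pi' Rz).
  - intros v.
    set (d0 := dirac x0 D). set (fa := F a D). set (fb := F b D).
    set (c2 := (v 1%nat - v 2%nat) / (fa - fb)).
    set (c1 := v 1%nat - c2 * fa).
    set (c0 := v O - c1 - c2 * d0).
    exists c0, c1, c2, (gv x0 F a b (fun x => x = x0)), (gv x0 F a b (fun _ => True)), (gv x0 F a b D).
    split; [exists (fun x => x = x0); repeat split; auto|].
    split; [exists (fun _ => True); repeat split; auto|].
    split; [exists D; repeat split; auto|].
    intros k Hk. unfold gv. rewrite dirac_x0, dirac_T, !Hna, !HF1.
    assert (fa - fb <> 0) by (unfold fa, fb; lra).
    destruct k as [|[|[|k]]]; [ | | |lia]; unfold c0, c1, c2; fold d0 fa fb; field; auto.
  - intros V HV.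
    set (A := fun i j => match excluded_middle_informative (Rz (V i j)) with
                | left h => proj1_sig (constructive_indefinite_description _ h)
                | right _ => fun _ : X => True end).
    assert (HA : forall i j, (i < j)%nat -> (j < n)%nat ->
        meas (A i j) /\ V i j O = dirac x0 (A i j) /\ V i j 1%nat = F a (A i j) /\ V i j 2%nat = F b (A i j)).
    { intros i j Hi Hj. unfold A. destruct (excluded_middle_informative (Rz (V i j))) as [h|h].
      - exact (proj2_sig (constructive_indefinite_description _ h)).
      - exfalso. apply h. apply HV; auto. }
    assert (Hm : forall i j, (i < j < n)%nat -> meas (A i j)) by (intros i j H; apply HA; lia).
    specialize (Hsame A Hm). rewrite !joint_Gsum in Hsame.
    unfold Jf.
    rewrite (Gsum_ext_range Q n pi _ (fun i j bb => if bb then (1 - al) * dirac x0 (A i j) + al * F ti (A i j)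
               else (1 - be) * dirac x0 (A i j) + be * F to (A i j))).
    rewrite (Gsum_ext_range Q n pi' (fun i j bb => dot (kap' bb) (V i j)) (fun i j bb => if bb then (1 - al') * dirac x0 (A i j) + al' * F ti' (A i j)
               else (1 - be') * dirac x0 (A i j) + be' * F to' (A i j))).
    exact Hsame.
    + intros i j bb Hi Hj. rewrite E2. destruct (HA i j Hi Hj) as [_ [h0 [h1 h2]]].
      unfold dot, gv. rewrite h0, h1, h2. reflexivity.
    + intros i j bb Hi Hj. rewrite E1. destruct (HA i j Hi Hj) as [_ [h0 [h1 h2]]].
      unfold dot, gv. rewrite h0, h1, h2. reflexivity.
Qed.

Lemma Gsum3 Q pi u : Gsum Q 3 pi u =
  fsum Q (fun a => fsum Q (fun b => fsum Q (fun c => pi a * pi b * pi c *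
     (u O 1%nat (Nat.eqb a b) * u O 2%nat (Nat.eqb a c) * u 1%nat 2%nat (Nat.eqb b c))))).
Proof.
  unfold Gsum. rewrite !lsum_assign_S. simpl. rewrite Rplus_0_r.
  apply fsum_ext; intros a _. apply fsum_ext; intros b _. apply fsum_ext; intros c _. ring.
Qed.

Definition ustar (k : nat) : nat -> nat -> bool -> R :=
  fun i j b => if Nat.ltb j k then (if Nat.eqb i 0 then (if b then 1 else 0) else 1) else 1.

Definition Hf Q pi k n (f : nat -> R) :=
  lsum (map (fun z => fprod n (fun i => pi (nth i z O)) *
     fprod n (fun j => fprod j (fun i => ustar k i j (Nat.eqb (nth i z O) (nth j z O)))) * f (nth O z O))
   (assignments Q n)).

Lemma nth_app_lt (z : list nat) q i : (i < length z)%nat -> nth i (z ++ [q]) O = nth i z O.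
Proof. intros; apply app_nth1; auto. Qed.
Lemma nth_app_eq (z : list nat) q : nth (length z) (z ++ [q]) O = q.
Proof. rewrite app_nth2 by lia. rewrite Nat.sub_diag. reflexivity. Qed.

Lemma Hf_1 Q pi k f : Hf Q pi k 1 f = fsum Q (fun q => pi q * f q).
Proof.
  unfold Hf. rewrite lsum_assign_S. simpl. rewrite Rplus_0_r. apply fsum_ext; intros; ring.
Qed.

Lemma Hf_S Q pi k n f : fsum Q pi = 1 -> (1 <= n)%nat ->
  Hf Q pi k (S n) f = Hf Q pi k n (fun q => (if Nat.ltb n k then pi q else 1) * f q).
Proof.
  intros Hpi Hn. unfold Hf. rewrite lsum_assign_S. apply lsum_map_ext_in. intros z Hz.
  destruct (assign_in _ _ _ Hz) as [Hl Hlt].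
  set (W := fprod n (fun i => pi (nth i z O))).
  set (P := fprod n (fun j => fprod j (fun i => ustar k i j (Nat.eqb (nth i z O) (nth j z O))))).
  assert (Hz0 : (nth O z O < Q)%nat) by (apply Hlt, nth_In; lia).
  rewrite (fsum_ext Q _ (fun q => W * P * f (nth O z O) *
        (pi q * (if Nat.ltb n k then (if Nat.eqb (nth O z O) q then 1 else 0) else 1)))).
  - rewrite fsum_scale. destruct (Nat.ltb n k).
    + rewrite (fsum_ext Q _ (fun q => if Nat.eqb (nth O z O) q then pi q else 0)).
      rewrite fsum_delta by auto. ring.
      intros q _. destruct (Nat.eqb _ q); ring.
    + rewrite (fsum_ext Q _ pi) by (intros; ring). rewrite Hpi. ring.
  - intros q Hq. cbn [fprod].
    assert (Hq' : nth n (z ++ [q]) O = q) by (rewrite <- Hl; apply nth_app_eq).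
    rewrite Hq'.
    rewrite (fprod_ext n (fun i => pi (nth i (z ++ [q]) O)) (fun i => pi (nth i z O)))
      by (intros; rewrite nth_app_lt; auto; lia).
    rewrite (fprod_ext n (fun j => fprod j (fun i => ustar k i j (Nat.eqb (nth i (z ++ [q]) O) (nth j (z ++ [q]) O))))
         (fun j => fprod j (fun i => ustar k i j (Nat.eqb (nth i z O) (nth j z O))))).
    2:{ intros j Hj. apply fprod_ext. intros i Hi. rewrite !nth_app_lt by lia. reflexivity. }
    rewrite (fprod_ext n (fun i => ustar k i n (Nat.eqb (nth i (z ++ [q]) O) q))
       (fun i => if Nat.eqb i 0 then (if Nat.ltb n k then (if Nat.eqb (nth O z O) q then 1 else 0) else 1) else 1)).
    2:{ intros i Hi. rewrite nth_app_lt by lia. unfold ustar.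
        destruct (Nat.eqb_spec i 0); [subst i|]; destruct (Nat.ltb n k); reflexivity. }
    rewrite fprod_first by lia. rewrite nth_app_lt by lia. fold W P. ring.
Qed.

Lemma Hf_pow Q pi k : fsum Q pi = 1 -> forall m, (1 <= m)%nat -> (m <= k)%nat -> forall f,
  Hf Q pi k m f = fsum Q (fun q => pi q ^ m * f q).
Proof.
  intros Hpi m Hm1 Hmk. induction m as [|m IH]; [lia|]. intros f.
  destruct m.
  - rewrite Hf_1. apply fsum_ext; intros; simpl; ring.
  - rewrite Hf_S by (auto; lia). replace (Nat.ltb (S m) k) with true by (symmetry; apply Nat.ltb_lt; lia).
    rewrite IH by lia. apply fsum_ext; intros; simpl; ring.
Qed.

Lemma Hf_big Q pi k : fsum Q pi = 1 -> (1 <= k)%nat -> forall n, (k <= n)%nat -> forall f,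
  Hf Q pi k n f = Hf Q pi k k f.
Proof.
  intros Hpi Hk n Hn. induction n as [|n IH]; intros f; [lia|].
  destruct (Nat.eq_dec (S n) k) as [<-|Hne]; [reflexivity|].
  rewrite Hf_S by (auto; lia). replace (Nat.ltb n k) with false by (symmetry; apply Nat.ltb_ge; lia).
  rewrite <- (IH ltac:(lia) f). f_equal. extensionality q. ring.
Qed.

Lemma Gsum_star Q pi k n : fsum Q pi = 1 -> (1 <= k)%nat -> (k <= n)%nat ->
  Gsum Q n pi (ustar k) = fsum Q (fun q => pi q ^ k).
Proof.
  intros Hpi Hk Hn.
  transitivity (Hf Q pi k n (fun _ => 1)).
  - unfold Gsum, Hf. apply lsum_map_ext_in. intros; ring.
  - rewrite Hf_big, Hf_pow by auto. apply fsum_ext; intros; ring.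
Qed.

Fixpoint esym (p : nat -> R) (N k : nat) : R :=
  match N with
  | O => match k with O => 1 | S _ => 0 end
  | S N' => match k with O => 1 | S k' => esym p N' (S k') + p N' * esym p N' k' end
  end.

Definition psum (p : nat -> R) N i := fsum N (fun q => p q ^ i).

Lemma esym_0 p N : esym p N O = 1.
Proof. destruct N; reflexivity. Qed.

Lemma esym_big p N k : (N < k)%nat -> esym p N k = 0.
Proof.
  revert k; induction N; intros k H; destruct k; try lia; simpl; auto.
  rewrite !IHN by lia. ring.
Qed.

Lemma esym_S_sub p N k i : (i < k)%nat ->
  esym p (S N) (k - i) = esym p N (k - i) + p N * esym p N (k - S i).
Proof. intros H. replace (k - i)%nat with (S (k - S i)) by lia. reflexivity. Qed.

Lemma fsum_S n f : fsum (S n) f = fsum n f + f n.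
Proof. reflexivity. Qed.

Lemma T_lemma p N k :
  fsum (S k) (fun i => (-1) ^ i * esym p (S N) (k - i) * p N ^ (S i)) = p N * esym p N k.
Proof.
  induction k.
  - simpl. rewrite esym_0. ring.
  - rewrite fsum_shift.
    rewrite (fsum_ext (S k) _ (fun i => (- p N) * ((-1) ^ i * esym p (S N) (k - i) * p N ^ (S i)))).
    + rewrite fsum_scale, IHk. rewrite Nat.sub_0_r. simpl. ring.
    + intros i _. simpl. ring.
Qed.

Lemma newton p N k :
  INR (S k) * esym p N (S k) = fsum (S k) (fun i => (-1) ^ i * esym p N (k - i) * psum p N (S i)).
Proof.
  revert k. induction N; intros k.
  - simpl esym. rewrite (fsum_ext _ _ (fun _ => 0)). rewrite fsum_zero; ring.
    intros i _. unfold psum. simpl. ring.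
  - set (a := p N).
    assert (Hps : forall i, psum p (S N) i = psum p N i + a ^ i) by (intros; reflexivity).
    rewrite (fsum_ext (S k) _ (fun i => (-1) ^ i * esym p N (k - i) * psum p N (S i) +
        a * (if Nat.ltb i k then (-1) ^ i * esym p N (k - S i) * psum p N (S i) else 0) +
        (-1) ^ i * esym p (S N) (k - i) * p N ^ (S i))).
    2:{ intros i Hi. rewrite Hps. destruct (Nat.ltb_spec i k).
        - rewrite esym_S_sub by auto. fold a. ring.
        - assert (i = k) by lia. subst i. rewrite Nat.sub_diag, !esym_0. fold a. ring. }
    rewrite !fsum_add, T_lemma, fsum_scale, <- IHN.
    assert (Hm : fsum (S k) (fun i => if Nat.ltb i k then (-1) ^ i * esym p N (k - S i) * psum p N (S i) else 0)
                 = INR k * esym p N k).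
    { rewrite fsum_S. replace (Nat.ltb k k) with false by (symmetry; apply Nat.ltb_irrefl).
      destruct k.
      - simpl. ring.
      - rewrite (fsum_ext (S k) _ (fun i => (-1) ^ i * esym p N (k - i) * psum p N (S i))).
        + rewrite <- IHN. ring.
        + intros i Hi. replace (Nat.ltb i (S k)) with true by (symmetry; apply Nat.ltb_lt; lia). reflexivity. }
    rewrite Hm. fold a. change (esym p (S N) (S k)) with (esym p N (S k) + a * esym p N k). rewrite (S_INR k). ring.
Qed.

Lemma esym_eq p p' N : (forall i, (1 <= i)%nat -> (i <= N)%nat -> psum p N i = psum p' N i) ->
  forall k, esym p N k = esym p' N k.
Proof.
  intros Hp k. enough (forall m, (m <= k)%nat -> esym p N m = esym p' N m) by auto.
  induction k; intros m Hm.
  - replace m with O by lia. rewrite !esym_0. reflexivity.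
  - destruct (Nat.eq_dec m (S k)) as [->|]; [|apply IHk; lia].
    destruct (Nat.le_gt_cases (S k) N).
    + assert (INR (S k) <> 0) by (apply not_0_INR; lia).
      apply (Rmult_eq_reg_l (INR (S k))); auto.
      rewrite !newton. apply fsum_ext. intros i Hi.
      rewrite IHk by lia. rewrite Hp by lia. reflexivity.
    + rewrite !esym_big by lia. reflexivity.
Qed.

Lemma prod_esym p N x : fprod N (fun q => x - p q) = fsum (S N) (fun k => (-1) ^ k * esym p N k * x ^ (N - k)).
Proof.
  induction N.
  - simpl. ring.
  - set (a := p N).
    rewrite (fsum_ext (S (S N)) _ (fun k => (-1) ^ k * esym p N k * x ^ (S N - k) +
       a * (match k with O => 0 | S k' => (-1) ^ k * esym p N k' * x ^ (S N - k) end))).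
    2:{ intros k _. destruct k.
        - rewrite !esym_0. ring.
        - change (esym p (S N) (S k)) with (esym p N (S k) + a * esym p N k). ring. }
    rewrite fsum_add, fsum_scale.
    rewrite (fsum_S (S N) (fun k => (-1) ^ k * esym p N k * x ^ (S N - k))).
    rewrite esym_big by lia.
    rewrite (fsum_shift (S N) (fun k => match k with O => 0 | S k' => (-1) ^ k * esym p N k' * x ^ (S N - k) end)).
    rewrite (fsum_ext (S N) (fun k => (-1) ^ k * esym p N k * x ^ (S N - k))
       (fun k => x * ((-1) ^ k * esym p N k * x ^ (N - k)))).
    2:{ intros k Hk. replace (S N - k)%nat with (S (N - k)) by lia. simpl. ring. }
    rewrite (fsum_ext (S N) (fun i => match S i with O => 0 | S k' => (-1) ^ S i * esym p N k' * x ^ (S N - S i) end)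
       (fun k => (-1) * ((-1) ^ k * esym p N k * x ^ (N - k)))).
    2:{ intros k Hk. simpl. ring. }
    rewrite !fsum_scale, <- IHN. cbn [fprod]. fold a. ring.
Qed.

Fixpoint lprod (l : list R) : R := match l with [] => 1 | x :: l' => x * lprod l' end.

Lemma lprod_app l1 l2 : lprod (l1 ++ l2) = lprod l1 * lprod l2.
Proof. induction l1; simpl; [ring|]. rewrite IHl1; ring. Qed.

Lemma fprod_lprod N f : fprod N f = lprod (map f (seq 0 N)).
Proof. induction N; [reflexivity|]. rewrite seq_S, map_app, lprod_app, <- IHN. simpl. ring. Qed.

Lemma lprod_perm l1 l2 : Permutation l1 l2 -> lprod l1 = lprod l2.
Proof. induction 1; simpl; try congruence; try ring. Qed.

Lemma lprod_zero {A} (f : A -> R) l : lprod (map f l) = 0 -> exists y, In y l /\ f y = 0.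
Proof.
  induction l; simpl; intros H. lra.
  apply Rmult_integral in H. destruct H as [H|H]; [exists a; auto|].
  destruct (IHl H) as [y [Hy Hf]]; exists y; auto.
Qed.

Lemma cont_eq f g a : continuity f -> continuity g -> (forall x, x <> a -> f x = g x) -> f a = g a.
Proof.
  intros Hf Hg H. destruct (Req_dec (f a) (g a)) as [|Hne]; auto. exfalso.
  set (eps := Rabs (f a - g a) / 2).
  assert (Heps : 0 < eps) by (unfold eps; assert (f a - g a <> 0) by (intro; apply Hne; lra); pose proof (Rabs_pos_lt _ H0); lra).
  destruct (Hf a eps Heps) as [d1 [Hd1 H1]].
  destruct (Hg a eps Heps) as [d2 [Hd2 H2]].
  set (x := a + Rmin d1 d2 / 2).
  assert (Hm : 0 < Rmin d1 d2) by (apply Rmin_pos; auto).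
  assert (Hx : x <> a) by (unfold x; lra).
  assert (Hdx : Rabs (x - a) < Rmin d1 d2).
  { unfold x. replace (a + Rmin d1 d2 / 2 - a) with (Rmin d1 d2 / 2) by ring. rewrite Rabs_right; lra. }
  assert (Hd1' : Rabs (x - a) < d1) by (pose proof (Rmin_l d1 d2); lra).
  assert (Hd2' : Rabs (x - a) < d2) by (pose proof (Rmin_r d1 d2); lra).
  specialize (H1 x). specialize (H2 x). simpl in H1, H2. unfold R_dist, D_x, no_cond in H1, H2.
  assert (A1 : Rabs (f x - f a) < eps) by (apply H1; split; [split; auto|auto]).
  assert (A2 : Rabs (g x - g a) < eps) by (apply H2; split; [split; auto|auto]).
  rewrite (H x Hx) in A1.
  assert (Rabs (f a - g a) <= Rabs (g x - f a) + Rabs (g x - g a)).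
  { replace (f a - g a) with (- (g x - f a) + (g x - g a)) by ring.
    eapply Rle_trans; [apply Rabs_triang|]. rewrite Rabs_Ropp. lra. }
  unfold eps in *. lra.
Qed.

Lemma cont_poly l : continuity (fun x => lprod (map (fun y => x - y) l)).
Proof.
  induction l; simpl.
  - apply continuity_const. intros x y; reflexivity.
  - apply (continuity_mult (fun x => x - a) (fun x => lprod (map (fun y => x - y) l))); auto.
    apply (continuity_minus (fun x => x) (fun _ => a)). apply derivable_continuous, derivable_id.
    apply continuity_const. intros x y; reflexivity.
Qed.

Lemma roots_perm l1 : forall l2, (forall x, lprod (map (fun y => x - y) l1) = lprod (map (fun y => x - y) l2)) ->
  Permutation l1 l2.
Proof.
  induction l1 as [|a l1 IH]; intros l2 H.
  - destruct l2 as [|b l2]; auto. specialize (H b). simpl in H. rewrite Rminus_diag in H. lra.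
  - assert (Ha : In a l2).
    { specialize (H a). simpl in H. rewrite Rminus_diag, Rmult_0_l in H.
      symmetry in H. destruct (lprod_zero _ _ H) as [y [Hy Hy0]]. replace a with y by lra. auto. }
    destruct (in_split _ _ Ha) as [la [lb ->]].
    assert (Hp : Permutation (la ++ a :: lb) (a :: la ++ lb)) by (symmetry; apply Permutation_middle).
    apply (Permutation_trans (l' := a :: la ++ lb)); [|symmetry; auto].
    apply perm_skip, IH.
    assert (G : forall x', x' <> a -> lprod (map (fun y => x' - y) l1) = lprod (map (fun y => x' - y) (la ++ lb))).
    { intros x' Hx'. specialize (H x'). rewrite (lprod_perm _ _ (Permutation_map _ Hp)) in H.
      simpl in H. apply (Rmult_eq_reg_l (x' - a)); auto. intro; apply Hx'; lra. }
    intros x. destruct (Req_dec x a) as [->|Hn]; [|auto].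
    apply (cont_eq (fun x => lprod (map (fun y => x - y) l1)) (fun x => lprod (map (fun y => x - y) (la ++ lb))) a);
      try apply cont_poly. exact G.
Qed.

Lemma roots_sigma N (a b : nat -> R) :
  (forall x, fprod N (fun q => x - a q) = fprod N (fun q => x - b q)) ->
  exists sigma, ((forall q, (q < N)%nat -> (sigma q < N)%nat) /\
     (forall q q', (q < N)%nat -> (q' < N)%nat -> sigma q = sigma q' -> q = q')) /\
     forall q, (q < N)%nat -> b q = a (sigma q).
Proof.
  intros H.
  assert (Hp : Permutation (map a (seq 0 N)) (map b (seq 0 N))).
  { apply roots_perm. intros x. specialize (H x). rewrite !fprod_lprod in H. rewrite !map_map. exact H. }
  apply (Permutation_nth _ _ 0) in Hp. destruct Hp as [_ [f [Hf1 [Hf2 Hf3]]]].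
  rewrite length_map, length_seq in *.
  exists f. split; [split; auto|].
  assert (E : forall (c : nat -> R) q, (q < N)%nat -> nth q (map c (seq 0 N)) 0 = c q).
  { intros c q Hq. rewrite (nth_indep _ 0 (c O)) by (rewrite length_map, length_seq; auto).
    rewrite map_nth, seq_nth by auto. reflexivity. }
  intros q Hq. specialize (Hf3 q Hq). rewrite !E in Hf3 by auto. exact Hf3.
Qed.

Definition u3 (w01 w02 w12 : bool -> R) : nat -> nat -> bool -> R :=
  fun i j => if andb (Nat.eqb i 0) (Nat.eqb j 1) then w01
             else if andb (Nat.eqb i 0) (Nat.eqb j 2) then w02 else w12.

Definition T3 Q pi (w01 w02 w12 : bool -> R) :=
  fsum Q (fun a => fsum Q (fun b => fsum Q (fun c => pi a * pi b * pi c *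
     (w01 (Nat.eqb a b) * w02 (Nat.eqb a c) * w12 (Nat.eqb b c))))).

Lemma G3 Q pi w01 w02 w12 : Gsum Q 3 pi (u3 w01 w02 w12) = T3 Q pi w01 w02 w12.
Proof. rewrite Gsum3. reflexivity. Qed.

Lemma sdw Q a g x y : (a < Q)%nat ->
  fsum Q (fun b => g b * (if Nat.eqb a b then x else y)) = y * fsum Q g + g a * (x - y).
Proof.
  intros Ha.
  rewrite (fsum_ext Q _ (fun b => y * g b + (if Nat.eqb a b then g b * (x - y) else 0))).
  - rewrite fsum_add, fsum_scale, fsum_delta by auto. reflexivity.
  - intros b _. destruct (Nat.eqb a b); ring.
Qed.

Lemma sd0 Q a g x : (a < Q)%nat -> fsum Q (fun b => g b * (if Nat.eqb a b then x else 0)) = g a * x.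
Proof. intros Ha. rewrite sdw by auto. ring. Qed.

Lemma fsum_sub n f g : fsum n (fun k => f k - g k) = fsum n f - fsum n g.
Proof. induction n; simpl; [ring|]. rewrite IHn; ring. Qed.

Lemma P1 Q pi w : fsum Q pi = 1 ->
  T3 Q pi w (fun _ => 1) (fun _ => 1) =
  fsum Q (fun q => pi q ^ 2) * w true + (1 - fsum Q (fun q => pi q ^ 2)) * w false.
Proof.
  intros Hpi. assert (Hpi' : fsum Q (fun k => pi k) = 1) by exact Hpi. unfold T3.
  rewrite (fsum_ext Q _ (fun a => pi a * (w false + pi a * (w true - w false)))).
  - rewrite (fsum_ext Q _ (fun a => w false * pi a + (w true - w false) * pi a ^ 2)) by (intros; ring).
    rewrite fsum_add, !fsum_scale, ?Hpi, ?Hpi'. ring.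
  - intros a Ha.
    rewrite (fsum_ext Q _ (fun b => (pi a * pi b) * (if Nat.eqb a b then w true else w false))).
    + rewrite sdw by auto. rewrite fsum_scale, ?Hpi, ?Hpi'. ring.
    + intros b Hb. rewrite (fsum_ext Q _ (fun c => (pi a * pi b * w (Nat.eqb a b)) * pi c)) by (intros; ring).
      rewrite fsum_scale, ?Hpi, ?Hpi'. destruct (Nat.eqb a b); ring.
Qed.

Lemma P2 Q pi c : fsum Q pi = 1 ->
  T3 Q pi (fun bb => if bb then c else 0) (fun bb => if bb then c else 0) (fun _ => 1) =
  c ^ 2 * fsum Q (fun q => pi q ^ 3).
Proof.
  intros Hpi. assert (Hpi' : fsum Q (fun k => pi k) = 1) by exact Hpi. unfold T3. rewrite <- fsum_scale. apply fsum_ext. intros a Ha.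
  rewrite (fsum_ext Q _ (fun b => (pi a * pi b * c * pi a) * (if Nat.eqb a b then c else 0))).
  - rewrite sd0 by auto. cbv beta. ring.
  - intros b Hb.
    rewrite (fsum_ext Q _ (fun d => (pi a * pi b * pi d * (if Nat.eqb a b then c else 0)) * (if Nat.eqb a d then c else 0)))
      by (intros; ring).
    rewrite sd0 by auto. destruct (Nat.eqb a b); ring.
Qed.

Lemma P3 Q pi c : fsum Q pi = 1 ->
  T3 Q pi (fun bb => if bb then c else 0) (fun bb => if bb then c else 0) (fun bb => if bb then c else 0) =
  c ^ 3 * fsum Q (fun q => pi q ^ 3).
Proof.
  intros Hpi. assert (Hpi' : fsum Q (fun k => pi k) = 1) by exact Hpi. unfold T3. rewrite <- fsum_scale. apply fsum_ext. intros a Ha.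
  rewrite (fsum_ext Q _ (fun b => (pi a * pi b * c * pi a * c) * (if Nat.eqb a b then c else 0))).
  - rewrite sd0 by auto. cbv beta. ring.
  - intros b Hb.
    rewrite (fsum_ext Q _ (fun d => (pi a * pi b * pi d * (if Nat.eqb a b then c else 0) * (if Nat.eqb b d then c else 0)) * (if Nat.eqb a d then c else 0)))
      by (intros; ring).
    rewrite sd0 by auto. rewrite (Nat.eqb_sym b a). destruct (Nat.eqb a b); ring.
Qed.

Lemma P4 Q pi c d : fsum Q pi = 1 ->
  T3 Q pi (fun bb => if bb then c else 0) (fun bb => if bb then c else 0) (fun bb => if bb then 0 else d) = 0.
Proof.
  intros Hpi. assert (Hpi' : fsum Q (fun k => pi k) = 1) by exact Hpi. unfold T3. transitivity (fsum Q (fun _ => 0)); [|apply fsum_zero]. apply fsum_ext. intros a Ha.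
  rewrite (fsum_ext Q _ (fun b => (pi a * pi b * c * pi a * (if Nat.eqb b a then 0 else d)) * (if Nat.eqb a b then c else 0))).
  - rewrite sd0 by auto. rewrite Nat.eqb_refl. ring.
  - intros b Hb.
    rewrite (fsum_ext Q _ (fun e => (pi a * pi b * pi e * (if Nat.eqb a b then c else 0) * (if Nat.eqb b e then 0 else d)) * (if Nat.eqb a e then c else 0)))
      by (intros; ring).
    rewrite sd0 by auto. cbv beta. ring.
Qed.

Lemma P5 Q pi c d : fsum Q pi = 1 ->
  T3 Q pi (fun bb => if bb then 0 else d) (fun bb => if bb then 0 else d) (fun bb => if bb then c else 0) =
  c * d ^ 2 * (fsum Q (fun q => pi q ^ 2) - fsum Q (fun q => pi q ^ 3)).
Proof.
  intros Hpi. assert (Hpi' : fsum Q (fun k => pi k) = 1) by exact Hpi. unfold T3.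
  set (s2 := fsum Q (fun q => pi q ^ 2)).
  rewrite (fsum_ext Q _ (fun a => s2 * (c * d ^ 2 * pi a) - c * d ^ 2 * pi a ^ 3)).
  - rewrite fsum_sub, !fsum_scale, ?Hpi, ?Hpi'. ring.
  - intros a Ha.
    rewrite (fsum_ext Q _ (fun b => (c * d ^ 2 * pi a) * pi b ^ 2 + (pi a * pi b ^ 2 * c * (- d ^ 2)) * (if Nat.eqb a b then 1 else 0))).
    + rewrite fsum_add, fsum_scale, sd0 by auto. cbv beta. fold s2. ring.
    + intros b Hb.
      rewrite (fsum_ext Q _ (fun e => (pi a * pi b * pi e * (if Nat.eqb a b then 0 else d) * (if Nat.eqb a e then 0 else d)) * (if Nat.eqb b e then c else 0)))
        by (intros; ring).
      rewrite sd0 by auto. cbv beta. destruct (Nat.eqb a b); ring.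
Qed.

Definition EL {X Theta : Type} (x0 : X) (F : Theta -> (X -> Prop) -> R) al be (ti to : Theta) (bb : bool) A :=
  if bb then (1 - al) * dirac x0 A + al * F ti A else (1 - be) * dirac x0 A + be * F to A.

Lemma Fdist {X Theta : Type} (meas : (X -> Prop) -> Prop) (F : Theta -> (X -> Prop) -> R) t1 t2 :
  finite_mixtures_identifiable meas F -> t1 <> t2 -> exists D, meas D /\ F t1 D <> F t2 D.
Proof.
  intros Hid Hne. apply NNPP. intros Hc.
  assert (Heq : forall A, meas A -> F t1 A = F t2 A).
  { intros A HA. apply NNPP. intros Hn. apply Hc. exists A; auto. }
  specialize (Hid 1%nat (fun _ => 1) (fun _ => 1) (fun _ => t1) (fun _ => t2) ltac:(lia)
     ltac:(intros; lra) ltac:(intros; lra) ltac:(simpl; ring) ltac:(simpl; ring)).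
  assert (H := Hid ltac:(intros A HA; simpl; rewrite Heq; auto) (fun s => s = t1)).
  simpl in H. unfold dirac, Defs.ind in H.
  destruct (excluded_middle_informative (t1 = t1)); destruct (excluded_middle_informative (t2 = t1)); try congruence; lra.
Qed.

Lemma pos_facts Q pi : (2 <= Q)%nat -> (forall q, (q < Q)%nat -> 0 < pi q < 1) -> fsum Q pi = 1 ->
  0 < fsum Q (fun q => pi q ^ 2) /\ 0 < fsum Q (fun q => pi q ^ 3) /\
  0 < 1 - fsum Q (fun q => pi q ^ 2) /\ 0 < fsum Q (fun q => pi q ^ 2) - fsum Q (fun q => pi q ^ 3).
Proof.
  intros HQ Hp Hs. assert (Hs' : fsum Q (fun k => pi k) = 1) by exact Hs.
  split; [apply fsum_pos; [lia|]; intros k Hk; specialize (Hp k Hk); apply pow_lt; lra|].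
  split; [apply fsum_pos; [lia|]; intros k Hk; specialize (Hp k Hk); apply pow_lt; lra|].
  split.
  - rewrite <- Hs' at 1. rewrite <- fsum_sub. apply fsum_pos; [lia|]. intros k Hk. specialize (Hp k Hk).
    simpl. nra.
  - rewrite <- fsum_sub. apply fsum_pos; [lia|]. intros k Hk. specialize (Hp k Hk).
    simpl. assert (0 < pi k * pi k) by nra. nra.
Qed.

Definition V3 (v01 v02 v12 : nat -> R) : nat -> nat -> nat -> R :=
  fun i j => if andb (Nat.eqb i 0) (Nat.eqb j 1) then v01
             else if andb (Nat.eqb i 0) (Nat.eqb j 2) then v02 else v12.

Lemma J_V3 Q kap pi v01 v02 v12 : Jf Q 3 kap pi (V3 v01 v02 v12) =
  T3 Q pi (fun b => dot (kap b) v01) (fun b => dot (kap b) v02) (fun b => dot (kap b) v12).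
Proof.
  unfold Jf. rewrite <- G3. f_equal. extensionality i. extensionality j. extensionality b.
  unfold u3, V3. destruct (andb _ _); [reflexivity|]. destruct (andb _ _); reflexivity.
Qed.

Definition e1v : nat -> R := fun k => if Nat.eqb k 1 then 1 else 0.
Definition e2v : nat -> R := fun k => if Nat.eqb k 2 then 1 else 0.
Definition onev : nat -> R := fun _ => 1.

Definition kapA (al be : R) : bool -> nat -> R :=
  fun bb => if bb then (fun k => match k with O => 1 - al | 1%nat => al | _ => 0 end)
            else (fun k => match k with O => 1 - be | 1%nat => 0 | _ => be end).
Definition kapB (al be : R) : bool -> nat -> R :=
  fun bb => if bb then (fun k => match k with O => 1 - al | 1%nat => 0 | _ => al end)
            else (fun k => match k with O => 1 - be | 1%nat => be | _ => 0 end).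

Lemma kapA_e1 al be : (fun b => dot (kapA al be b) e1v) = (fun b => if b then al else 0).
Proof. extensionality b. destruct b; unfold dot, e1v; simpl; ring. Qed.
Lemma kapA_e2 al be : (fun b => dot (kapA al be b) e2v) = (fun b => if b then 0 else be).
Proof. extensionality b. destruct b; unfold dot, e2v; simpl; ring. Qed.
Lemma kapA_one al be : (fun b => dot (kapA al be b) onev) = (fun _ => 1).
Proof. extensionality b. destruct b; unfold dot, onev; simpl; ring. Qed.
Lemma kapB_e1 al be : (fun b => dot (kapB al be b) e1v) = (fun b => if b then 0 else be).
Proof. extensionality b. destruct b; unfold dot, e1v; simpl; ring. Qed.
Lemma kapB_e2 al be : (fun b => dot (kapB al be b) e2v) = (fun b => if b then al else 0).
Proof. extensionality b. destruct b; unfold dot, e2v; simpl; ring. Qed.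

Lemma single {X Theta : Type} (x0 : X) (F : Theta -> (X -> Prop) -> R) Q pi al be ti to A0 :
  (forall th, F th (fun _ => True) = 1) -> fsum Q pi = 1 ->
  joint_rect x0 F Q pi al be ti to 3 (fun i j => if andb (Nat.eqb i 0) (Nat.eqb j 1) then A0 else (fun _ => True)) =
  fsum Q (fun q => pi q ^ 2) * EL x0 F al be ti to true A0 + (1 - fsum Q (fun q => pi q ^ 2)) * EL x0 F al be ti to false A0.
Proof.
  intros HF1 Hpi. rewrite joint_Gsum.
  rewrite <- (P1 Q pi (fun bb => EL x0 F al be ti to bb A0) Hpi). rewrite <- G3. f_equal.
  extensionality i. extensionality j. extensionality b. unfold u3.
  destruct (andb _ _); [reflexivity|]. unfold EL.
  destruct (andb _ _); destruct b; rewrite dirac_T, !HF1; ring.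
Qed.

Lemma mem_helper {T : Type} (t0 t1 t0' t1' s : T) w0 w1 w0' w1' :
  0 < w0 -> 0 < w1 -> (s = t0 \/ s = t1) ->
  0 + w0 * dirac t0 (fun th => th = s) + w1 * dirac t1 (fun th => th = s) =
  0 + w0' * dirac t0' (fun th => th = s) + w1' * dirac t1' (fun th => th = s) -> s = t0' \/ s = t1'.
Proof.
  intros H0 H1 Hs H. apply NNPP; intro Hn. apply not_or_and in Hn. destruct Hn as [n1 n2].
  unfold dirac, Defs.ind in H.
  destruct (excluded_middle_informative (t0' = s)); [congruence|].
  destruct (excluded_middle_informative (t1' = s)); [congruence|].
  destruct (excluded_middle_informative (t0 = s)); destruct (excluded_middle_informative (t1 = s));
  destruct Hs; try congruence; lra.
Qed.

Theorem theorem6 (X Theta : Type) (meas : (X -> Prop) -> Prop) (x0 : X)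
    (F : Theta -> (X -> Prop) -> R) (Q : nat) :
  is_sigma_algebra meas ->
  meas (fun x => x = x0) ->
  (forall th, is_prob_measure meas (F th)) ->
  no_atom_at x0 F ->
  finite_mixtures_identifiable meas F ->
  (2 <= Q)%nat ->
  forall (pi : nat -> R) (alpha beta : R) (th_in th_out : Theta)
         (pi' : nat -> R) (alpha' beta' : R) (th_in' th_out' : Theta),
  valid_params Q pi alpha beta th_in th_out ->
  valid_params Q pi' alpha' beta' th_in' th_out' ->
  (same_law_K meas x0 F Q 3 pi alpha beta th_in th_out pi' alpha' beta' th_in' th_out' ->
     alpha = alpha' /\ beta = beta' /\ th_in = th_in' /\ th_out = th_out') /\
  (alpha = alpha' -> beta = beta' -> th_in = th_in' -> th_out = th_out' ->
   same_law_K meas x0 F Q Q pi alpha beta th_in th_out pi' alpha' beta' th_in' th_out' ->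
     exists sigma : nat -> nat, is_perm Q sigma /\
       forall q, (q < Q)%nat -> pi' q = pi (sigma q)).
Proof.
  intros Hsig Hx0 Hprob Hna Hid HQ pi al be ti to pi' al' be' ti' to' Hv Hv'.
  destruct Hsig as [HT [Hc Hu]].
  assert (HF1 : forall th, F th (fun _ => True) = 1) by (intros th; apply (Hprob th)).
  destruct Hv as [Hp [Hs [Hal [Hbe Hth]]]]. destruct Hv' as [Hp' [Hs' [Hal' [Hbe' Hth']]]].
  destruct (pos_facts Q pi HQ Hp Hs) as [Z2 [Z3 [Z12 Z23]]].
  destruct (pos_facts Q pi' HQ Hp' Hs') as [Z2' [Z3' [Z12' Z23']]].
  destruct (Fdist meas F ti to Hid Hth) as [D [HD HFD]].
  assert (EA : forall (al be : R) (ti to : Theta) (A : X -> Prop) (bb : bool), (if bb then (1 - al) * dirac x0 A + al * F ti A else (1 - be) * dirac x0 A + be * F to A)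
      = dot (kapA al be bb) (gv x0 F ti to A)).
  { intros. destruct bb; unfold dot, gv; simpl; ring. }
  split.
  -
    intros Hsame.
    set (s2 := fsum Q (fun q => pi q ^ 2)) in *. set (s3 := fsum Q (fun q => pi q ^ 3)) in *.
    set (s2' := fsum Q (fun q => pi' q ^ 2)) in *. set (s3' := fsum Q (fun q => pi' q ^ 3)) in *.
    assert (HE : forall A0, meas A0 ->
      s2 * EL x0 F al be ti to true A0 + (1 - s2) * EL x0 F al be ti to false A0 =
      s2' * EL x0 F al' be' ti' to' true A0 + (1 - s2') * EL x0 F al' be' ti' to' false A0).
    { intros A0 HA0. unfold s2, s2'.
      rewrite <- (single x0 F Q pi al be ti to A0 HF1 Hs), <- (single x0 F Q pi' al' be' ti' to' A0 HF1 Hs').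
      apply Hsame. intros i j Hij. destruct (andb _ _); auto. }
    set (m := s2 * al + (1 - s2) * be). set (m' := s2' * al' + (1 - s2') * be').
    assert (Hm : 0 < m) by (unfold m; nra). assert (Hm' : 0 < m') by (unfold m'; nra).
    assert (Hmm : m = m').
    { assert (H0 := HE _ Hx0). unfold EL in H0. rewrite !dirac_x0, !Hna in H0. unfold m, m'. nra. }
    assert (Hmix : forall A, meas A -> s2 * al * F ti A + (1 - s2) * be * F to A =
                                      s2' * al' * F ti' A + (1 - s2') * be' * F to' A).
    { intros A HA. assert (H0 := HE A HA). unfold EL in H0.
      replace (s2 * al * F ti A + (1 - s2) * be * F to A) with
        (s2 * ((1 - al) * dirac x0 A + al * F ti A) + (1 - s2) * ((1 - be) * dirac x0 A + be * F to A) - (1 - m) * dirac x0 A)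
        by (unfold m; ring).
      replace (s2' * al' * F ti' A + (1 - s2') * be' * F to' A) with
        (s2' * ((1 - al') * dirac x0 A + al' * F ti' A) + (1 - s2') * ((1 - be') * dirac x0 A + be' * F to' A) - (1 - m') * dirac x0 A)
        by (unfold m'; ring).
      rewrite H0, Hmm. ring. }
    assert (Hid2 := Hid 2%nat (fun i => if Nat.eqb i 0 then s2 * al / m else (1 - s2) * be / m)
                      (fun i => if Nat.eqb i 0 then s2' * al' / m' else (1 - s2') * be' / m')
                      (fun i => if Nat.eqb i 0 then ti else to) (fun i => if Nat.eqb i 0 then ti' else to')).
    assert (W0 : 0 < s2 * al / m) by (apply Rdiv_lt_0_compat; nra).
    assert (W1 : 0 < (1 - s2) * be / m) by (apply Rdiv_lt_0_compat; nra).
    assert (W0' : 0 < s2' * al' / m') by (apply Rdiv_lt_0_compat; nra).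
    assert (W1' : 0 < (1 - s2') * be' / m') by (apply Rdiv_lt_0_compat; nra).
    assert (Q1 : (1 <= 2)%nat) by lia.
    assert (Q2 : forall i, (i < 2)%nat -> 0 < (if Nat.eqb i 0 then s2 * al / m else (1 - s2) * be / m))
      by (intros i _; destruct (Nat.eqb i 0); auto).
    assert (Q3 : forall i, (i < 2)%nat -> 0 < (if Nat.eqb i 0 then s2' * al' / m' else (1 - s2') * be' / m'))
      by (intros i _; destruct (Nat.eqb i 0); auto).
    assert (Q4 : fsum 2 (fun i => if Nat.eqb i 0 then s2 * al / m else (1 - s2) * be / m) = 1)
      by (cbn [fsum Nat.eqb]; unfold m; field; nra).
    assert (Q5 : fsum 2 (fun i => if Nat.eqb i 0 then s2' * al' / m' else (1 - s2') * be' / m') = 1)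
      by (cbn [fsum Nat.eqb]; unfold m'; field; nra).
    specialize (Hid2 Q1 Q2 Q3 Q4 Q5).
    assert (Hid3 : forall B, 0 + s2 * al / m * dirac ti B + (1 - s2) * be / m * dirac to B =
                             0 + s2' * al' / m' * dirac ti' B + (1 - s2') * be' / m' * dirac to' B).
    { apply Hid2. intros A HA. cbn [fsum Nat.eqb].
      transitivity ((s2 * al * F ti A + (1 - s2) * be * F to A) / m); [field; lra|].
      rewrite Hmix by auto. rewrite Hmm. field; lra. }
    assert (M1 := mem_helper ti to ti' to' ti _ _ _ _ W0 W1 (or_introl eq_refl) (Hid3 _)).
    assert (M2 := mem_helper ti to ti' to' to _ _ _ _ W0 W1 (or_intror eq_refl) (Hid3 _)).
    assert (EB : forall (al be : R) (ti to : Theta) (A : X -> Prop) (bb : bool),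
      (if bb then (1 - al) * dirac x0 A + al * F to A else (1 - be) * dirac x0 A + be * F ti A)
      = dot (kapB al be bb) (gv x0 F ti to A)).
    { intros. destruct bb; unfold dot, gv; simpl; ring. }
    destruct M1 as [E1|E1]; destruct M2 as [E2|E2]; try (exfalso; congruence).
    +
      subst ti' to'.
      assert (Hall := frame meas x0 F ti to D Q 3 pi al be ti to pi' al' be' ti to (kapA al be) (kapA al' be')
         Hx0 HT HD HFD HF1 Hna (EA al be ti to) (EA al' be' ti to) Hsame).
      assert (J1 := Hall (V3 e1v onev onev)). rewrite !J_V3, !kapA_e1, !kapA_one, !P1 in J1 by auto.
      assert (J2 := Hall (V3 e1v e1v onev)). rewrite !J_V3 in J2. rewrite !kapA_e1 in J2. rewrite !kapA_one in J2. rewrite !P2 in J2 by auto.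
      assert (J3 := Hall (V3 e1v e1v e1v)). rewrite !J_V3, !kapA_e1, !P3 in J3 by auto.
      assert (J4 := Hall (V3 e2v onev onev)). rewrite !J_V3, !kapA_e2, !kapA_one, !P1 in J4 by auto.
      fold s2 s3 s2' s3' in J1, J2, J3, J4. cbv beta iota in J1, J4.
      assert (Ha : al = al').
      { assert (K : s3 * al ^ 2 * (al' - al) = 0).
        { replace (s3 * al ^ 2 * (al' - al)) with (al' * (al ^ 2 * s3) - al ^ 3 * s3) by ring.
          rewrite J2, J3. ring. }
        apply Rmult_integral in K. destruct K as [K|K]; [|lra].
        exfalso. assert (0 < s3 * al ^ 2) by (apply Rmult_lt_0_compat; [auto|apply pow_lt; lra]). lra. }
      subst al'.
      assert (Hs2 : s2 = s2').
      { apply (Rmult_eq_reg_r al); [|lra]. nra. }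
      assert (Hb : be = be').
      { rewrite <- Hs2 in J4. apply (Rmult_eq_reg_l (1 - s2)); [|lra]. nra. }
      auto.
    +
      subst ti' to'.
      assert (Hall := frame meas x0 F ti to D Q 3 pi al be ti to pi' al' be' to ti (kapA al be) (kapB al' be')
         Hx0 HT HD HFD HF1 Hna (EA al be ti to) (EB al' be' ti to) Hsame).
      assert (J1 := Hall (V3 e1v e1v e2v)). rewrite !J_V3, !kapA_e1, !kapA_e2, !kapB_e1, !kapB_e2 in J1.
      rewrite P4, P5 in J1 by auto. fold s2' s3' in J1.
      exfalso. assert (0 < al' * be' ^ 2 * (s2' - s3')).
      { apply Rmult_lt_0_compat; [apply Rmult_lt_0_compat; [lra|apply pow_lt; lra]|lra]. }
      lra.
  - intros Ea Eb Ei Eo Hsame. subst al' be' ti' to'.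
    assert (Hall := frame meas x0 F ti to D Q Q pi al be ti to pi' al be ti to (kapA al be) (kapA al be)
       Hx0 HT HD HFD HF1 Hna (EA al be ti to) (EA al be ti to) Hsame).
    assert (Hg : forall u, Gsum Q Q pi u = Gsum Q Q pi' u).
    { intros u. specialize (Hall (fun i j k => match k with O => 0 | 1%nat => u i j true / al | _ => u i j false / be end)).
      unfold Jf in Hall.
      replace (fun i j b => dot (kapA al be b) (match b with _ => fun k => match k with O => 0 | 1%nat => u i j true / al | _ => u i j false / be end end)) with u in Hall.
      exact Hall. extensionality i. extensionality j. extensionality b. destruct b; unfold dot; simpl; field; lra. }
    assert (Hps : forall i, (1 <= i)%nat -> (i <= Q)%nat -> psum pi Q i = psum pi' Q i).
    { intros i H1 H2. unfold psum. rewrite <- (Gsum_star Q pi i Q), <- (Gsum_star Q pi' i Q) by auto. apply Hg. }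
    assert (Hpoly : forall x, fprod Q (fun q => x - pi q) = fprod Q (fun q => x - pi' q)).
    { intros x. rewrite !prod_esym. apply fsum_ext. intros k _. rewrite (esym_eq pi pi' Q Hps k). reflexivity. }
    destruct (roots_sigma Q pi pi' Hpoly) as [sigma [[H1 H2] H3]].
    exists sigma. split; [split; auto|auto].
Qed.
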